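(* Let $p_1>p_2\ge2$ be relatively prime positive integers, and write $p_1=ap_2+b$ with integers $a\ge1$ and $0<b<p_2$. Then the first $p_1+p_2$ terms of the D'Hondt sequence $S_1(p_1,p_2)$ are $$1^{a},\,2,\,1^{k_2},\,2,\,1^{k_3},\,2,\,\dots,\,1^{k_{p_2}},\,2,$$ where for $i=2,\dots,p_2$, $k_i=a+1$ if $i\in S$ and $k_i=a$ otherwise, with $S=\{\lceil jp_2/b\rceil : j=1,\dots,b\}$.
   Context: Stationary divisor method with cut point $c$ for votes $(p_1,p_2)$: seats are allocated one at a time. Initially $a_1=a_2=0$; each next seat goes to a party $i$ maximizing $p_i/(a_i+c)$, whose $a_i$ then increases by $1$. Ties are broken in favor of party $1$. D'Hondt's method is $c=1$. $S_1(p_1,p_2)$ is the infinite sequence of party labels (in $\{1,2\}$) of successive seats. The notation $1^k$ denotes $k$ consecutive $1$'s. *)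

(* Defs.v *)
From mathcomp Require Import all_boot all_order all_algebra.
Set Implicit Arguments. Unset Strict Implicit. Unset Printing Implicit Defensive.
Import Order.TTheory GRing.Theory Num.Theory.

Local Open Scope ring_scope.

(* Stationary divisor method with cut point c for two parties with votes
   (p1, p2).  [sdm_alloc c p1 p2 n] = (a1, a2) is the allocation after n seats
   have been distributed; [sdm_next c p1 p2 a] is the label (1 or 2) of the
   party getting the next seat from allocation a: party 1 iff
   p1/(a1+c) >= p2/(a2+c) (ties broken in favour of party 1). *)
Definition sdm_next (c : rat) (p1 p2 : nat) (a : nat * nat) : nat :=
  if (p2%:R / (a.2%:R + c)) <= (p1%:R / (a.1%:R + c)) then 1%N else 2%N.

Fixpoint sdm_alloc (c : rat) (p1 p2 : nat) (n : nat) : nat * nat :=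
  match n with
  | O => (0%N, 0%N)
  | S m => let a := sdm_alloc c p1 p2 m in
           if sdm_next c p1 p2 a == 1%N then (a.1.+1, a.2) else (a.1, a.2.+1)
  end.

(* The infinite label sequence, as a function of the 0-based seat index:
   term n (0-based) is the party receiving the (n+1)-th seat. *)
Definition sdm_seq (c : rat) (p1 p2 : nat) (n : nat) : nat :=
  sdm_next c p1 p2 (sdm_alloc c p1 p2 n).

Definition S1 (p1 p2 : nat) : nat -> nat := sdm_seq 1 p1 p2.

Definition Sset (p2 b : nat) : seq int :=
  [seq Num.ceil ((j * p2)%:R / b%:R : rat) | j <- iota 1 b].

Definition kval (a p2 b i : nat) : nat :=
  if (i%:Z \in Sset p2 b) then a.+1 else a.

Definition predicted (a p2 b : nat) : seq nat :=
  nseq a 1%N ++ [:: 2%N] ++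
  flatten [seq nseq (kval a p2 b i) 1%N ++ [:: 2%N] | i <- iota 2 (p2.-1)].

(* Main.v *)
Require Import Defs.
From mathcomp Require Import all_boot all_order all_algebra.
Import Order.TTheory GRing.Theory Num.Theory.
From mathcomp Require Import zify.
Local Open Scope ring_scope.

Section S.
Variables p1 p2 : nat.

Lemma next_eq x m : sdm_next 1 p1 p2 (x, m) = if (p2 * x.+1 <= p1 * m.+1)%N then 1%N else 2%N.
Proof.
rewrite /sdm_next /= !natr1.
have hx : (0:rat) < x.+1%:R by rewrite ltr0n.
have hm : (0:rat) < m.+1%:R by rewrite ltr0n.
rewrite ler_pdivrMr // mulrAC ler_pdivlMr // -!natrM ler_nat.
by rewrite mulnC.
Qed.

Definition stp (s : nat * nat) : nat * nat :=
  if sdm_next 1 p1 p2 s == 1%N then (s.1.+1, s.2) else (s.1, s.2.+1).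

Fixpoint run (s : nat * nat) (n : nat) : seq nat :=
  match n with
  | O => [::]
  | S n' => sdm_next 1 p1 p2 s :: run (stp s) n'
  end.

Lemma mk_run n k : mkseq (fun i => S1 p1 p2 (k + i)) n = run (sdm_alloc 1 p1 p2 k) n.
Proof.
elim: n k => [|n IH] k //.
rewrite /mkseq /= addn0.
rewrite -[1%N]/(1+0)%N iotaDl -map_comp.
have := IH k.+1; rewrite /mkseq => <-.
congr (_ :: _); apply: eq_map => i /=.
by rewrite addnA addn1.
Qed.

Definition N m := (m * p1 %/ p2)%N.

Hypothesis p2pos : (0 < p2)%N.

Lemma block m d r : forall x, (x + d = N m.+1)%N ->
  run (x, m) (d + 1 + r) = nseq d 1%N ++ 2%N :: run (N m.+1, m.+1) r.
Proof.
elim: d => [|d IH] x Hx.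
  rewrite addn0 in Hx; subst x.
  rewrite add0n /= next_eq.
  have F : (p2 * (N m.+1).+1 <= p1 * m.+1)%N = false.
    have H : (m.+1 * p1 < (N m.+1).+1 * p2)%N by rewrite -ltn_divLR.
    apply/negbTE; rewrite -ltnNge; nia.
  by rewrite F /stp next_eq F /=.
rewrite addSn /= next_eq.
have F : (p2 * x.+1 <= p1 * m.+1)%N.
  have H : (x.+1 * p2 <= m.+1 * p1)%N by rewrite -leq_divRL // -/(N m.+1) -Hx; lia.
  nia.
rewrite F /stp next_eq F /=.
by rewrite /= IH // -Hx addSnnS.
Qed.

Lemma N_mono m : (N m <= N m.+1)%N.
Proof. by apply: leq_div2r; rewrite leq_mul2r leqnSn orbT. Qed.

Lemma N_le m : (m <= p2)%N -> (N m <= p1)%N.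
Proof.
move=> h; rewrite /N -[X in (_ <= X)%N](mulnK p1 p2pos) leq_div2r //.
by rewrite mulnC leq_mul2l h orbT.
Qed.

Lemma blocks k : forall m, (m + k = p2)%N ->
  run (N m, m) (p1 + p2 - N m - m) =
  flatten [seq nseq (N i.+1 - N i) 1%N ++ [:: 2%N] | i <- iota m k].
Proof.
elim: k => [|k IH] m Hm.
  rewrite addn0 in Hm; subst m.
  have -> : N p2 = p1 by rewrite /N mulKn.
  by rewrite addKn subnn.
have h1 := N_mono m. have h2 : (N m.+1 <= p1)%N by apply: N_le; lia.
have -> : (p1 + p2 - N m - m = (N m.+1 - N m) + 1 + (p1 + p2 - N m.+1 - m.+1))%N by lia.
rewrite (@block m _ _ (N m)); last by lia.
rewrite IH; last by lia.
by rewrite /= -catA.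
Qed.

End S.
Lemma ceil_charac (i j p2 b : nat) : (0<b)%N -> (0<i)%N ->
  (Num.ceil ((j * p2)%N%:R / b%:R : rat) == i%:Z) = ((i.-1 * b < j * p2) && (j * p2 <= i*b))%N.
Proof.
move=> b0 i0; rewrite Num.Theory.ceil_eq.
have -> : (i%:Z - 1) = (i.-1)%:Z by rewrite -[in LHS](prednK i0) -addn1 PoszD addrK.
have bp : (0 : rat) < b%:R by rewrite ltr0n.
rewrite ltr_pdivlMr // ler_pdivrMr // !pmulrn -!natrM ltr_nat ler_nat.
by rewrite [(j * p2)%N]mulnC.
Qed.

Lemma Nform p1 p2 a b i : (0 < p2)%N -> p1 = (a * p2 + b)%N ->
  N p1 p2 i = (i * a + (i * b) %/ p2)%N.
Proof. by move=> h ->; rewrite /N mulnDr mulnA divnMDl. Qed.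

Lemma key i a b p2 : (1 <= i < p2)%N -> (0 < b < p2)%N ->
  kval a p2 b i.+1 = ((i.+1 * a + (i.+1 * b) %/ p2) - (i * a + (i * b) %/ p2))%N.
Proof.
move=> /andP[i1 ip] /andP[b0 bp].
have p0 : (0 < p2)%N by lia.
set q := ((i.+1 * b) %/ p2)%N; set q' := ((i * b) %/ p2)%N.
have h1 : (q' <= q)%N by apply: leq_div2r; rewrite leq_mul2r leqnSn orbT.
have h2 : (i * b < q'.+1 * p2)%N by rewrite -ltn_divLR.
have h3 : (q * p2 <= i.+1 * b)%N by apply: leq_trunc_div.
have h4 : (q <= q'.+1)%N.
  rewrite -ltnS ltn_divLR //; nia.
rewrite /kval; case: ifP => Hm.
  case/mapP: Hm => j; rewrite mem_iota => /andP[j1 jb] /esym/eqP.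
  rewrite ceil_charac //= => /andP[l1 l2].
  have : (j <= q)%N by rewrite leq_divRL.
  have : (q' < j)%N by rewrite ltn_divLR.
  nia.
have : q = q'.
  apply/eqP; rewrite eqn_leq h1 andbT leqNgt; apply/negP => hq.
  move/negbT: Hm => /negP; apply; apply/mapP; exists q.
    rewrite mem_iota; apply/andP; split; first by lia.
    rewrite add1n /q ltn_divLR //; nia.
  apply/eqP; rewrite eq_sym ceil_charac //=; apply/andP; split => //.

  by rewrite -ltn_divLR.
nia.
Qed.

Theorem mainTheorem13 (p1 p2 a b : nat) :
  (2 <= p2)%N -> (p2 < p1)%N -> coprime p1 p2 ->
  (1 <= a)%N -> (0 < b)%N -> (b < p2)%N -> p1 = (a * p2 + b)%N ->
  mkseq (S1 p1 p2) (p1 + p2) = predicted a p2 b.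
Proof.
move=> h2 h12 _ ha hb hbp hp1.
have p0 : (0 < p2)%N by lia.
have E : mkseq (S1 p1 p2) (p1+p2) = run p1 p2 (N p1 p2 0, 0%N) (p1+p2 - N p1 p2 0 - 0).
  by rewrite /N mul0n div0n !subn0 -(mk_run p1 p2 (p1+p2) 0).
rewrite E (@blocks p1 p2 p0 p2 0) //.
have -> : iota 0 p2 = 0%N :: iota 1 p2.-1 by rewrite -{1}(prednK p0).
rewrite /= /predicted -catA.
have -> : (N p1 p2 1 - N p1 p2 0 = a)%N.
  rewrite !(@Nform p1 p2 a b _ p0 hp1) mul1n divn_small; last by rewrite mul1n.
  by rewrite !mul0n div0n !addn0 subn0.
congr (_ ++ _ ++ _).
have -> : iota 2 p2.-1 = map (addn 1) (iota 1 p2.-1) by rewrite -iotaDl.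
rewrite -map_comp; congr flatten; apply/eq_in_map => i.
rewrite mem_iota => /andP[i1 i2] /=.
rewrite add1n !(@Nform p1 p2 a b _ p0 hp1) key //; apply/andP; split => //; lia.
Qed.
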